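(* Let $\mathsf{C}$ be a (strict) 2-category, let $\Delta:\mathsf{C}\to\mathsf{Cat}$ be a (strict) 2-functor, and let $\mathrm{W}$ be a Lawvere weight on $\mathsf{C}$. Then the 2-functor interleaving distance $d_{\Delta,\mathrm{W}}$ is an extended pseudometric on $\mathrm{Im}(\Delta)$ (i.e. it takes values in $[0,\infty]$, vanishes on the diagonal, is symmetric, and satisfies the triangle inequality).
   Context: $\mathsf{Cat}$ is the 2-category of small categories, functors and natural transformations. Composition of 1-morphisms is written $gf=g\circ f$. For $A\in\mathsf C_0$, $\Delta(A)$ is a small category; for $f:A\to B$, $\Delta_f:\Delta(A)\to\Delta(B)$ is a functor; for a 2-morphism $\alpha:f\Rightarrow g$, $\Delta(\alpha):\Delta_f\Rightarrow\Delta_g$ is a natural transformation with components $\Delta(\alpha)_X$; $\Delta$ preserves identities and vertical and horizontal composition. $\mathrm{Im}(\Delta)=\bigcup_{A\in\mathsf C_0}\Delta(A)_0$. A Lawvere weight on $\mathsf{C}$ is a function $\mathrm{W}$ from 1-morphisms to $\mathbb{R}\cup\{\infty\}$ with $\mathrm{W}(g)\ge0$, $\mathrm{W}(1_A)=0$, and $\mathrm{W}(gf)\le\mathrm{W}(g)+\mathrm{W}(f)$ for composable $f,g$. For $X\in\Delta(A)_0$, $Y\in\Delta(B)_0$, $g\in\mathsf C_1(B,A)$, $h\in\mathsf C_1(A,B)$, $X$ and $Y$ are $(g,h)$-interleaved if there exist morphisms $\phi:X\to\Delta_g(Y)$ in $\Delta(A)$, $\psi:Y\to\Delta_h(X)$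 in $\Delta(B)$ and 2-morphisms $\alpha:1_A\Rightarrow gh$, $\beta:1_B\Rightarrow hg$ with $\Delta_g(\psi)\circ\phi=\Delta(\alpha)_X$ and $\Delta_h(\phi)\circ\psi=\Delta(\beta)_Y$. Then $d_{\Delta,\mathrm{W}}(X,Y)=\inf\{\max\{\mathrm{W}(g),\mathrm{W}(h)\}:X,Y\ (g,h)\text{-interleaved}\}$, with $\inf\emptyset=\infty$. *)

(* Defs.v *)
From HB Require Import structures.
From mathcomp Require Import all_boot all_order all_algebra.
From mathcomp Require Import boolp classical_sets reals constructive_ereal ereal.
Set Implicit Arguments. Unset Strict Implicit. Unset Printing Implicit Defensive.
Import Order.TTheory GRing.Theory Num.Theory.

Definition cast2 (X : Type) (P : X -> X -> Type) (f f' g g' : X)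
  (e1 : f = f') (e2 : g = g') (u : P f g) : P f' g' :=
  eq_rect g (fun y => P f' y) (eq_rect f (fun x => P x g) u f' e1) g' e2.

Record CatData := {
  cobj :> Type;
  chom : cobj -> cobj -> Type;
  cid : forall x, chom x x;
  ccomp : forall x y z, chom y z -> chom x y -> chom x z }.
Arguments chom {c} x y.
Arguments cid {c} x.
Arguments ccomp {c x y z} g f.

Record IsCategory (C : CatData) : Prop := {
  ccomp_id_l : forall (x y : C) (f : chom x y), ccomp (cid y) f = f;
  ccomp_id_r : forall (x y : C) (f : chom x y), ccomp f (cid x) = f;
  ccomp_assoc : forall (x y z w : C) (h : chom z w) (g : chom y z) (f : chom x y),
      ccomp h (ccomp g f) = ccomp (ccomp h g) f }.

Record Category := { cdata :> CatData; cax : IsCategory cdata }.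

Definition homcast (C : CatData) (x x' y y' : C) (e1 : x = x') (e2 : y = y')
  (u : chom x y) : chom x' y' := @cast2 C (@chom C) x x' y y' e1 e2 u.

Record Functor (C D : Category) := {
  fobj :> C -> D;
  fmap : forall x y : C, chom x y -> chom (fobj x) (fobj y);
  fmap_id : forall x : C, fmap (cid x) = cid (fobj x);
  fmap_comp : forall (x y z : C) (g : chom y z) (f : chom x y),
      fmap (ccomp g f) = ccomp (fmap g) (fmap f) }.
Arguments fmap {C D} _ {x y} _.

Definition FId (C : Category) : Functor C C.
Proof.
refine {| fobj := fun x => x; fmap := fun x y f => f |}; by [].
Defined.

Definition FComp (C D E : Category) (G : Functor D E) (F : Functor C D) :
  Functor C E.
Proof.
refine {| fobj := fun x => G (F x); fmap := fun x y f => fmap G (fmap F f) |}.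
- by move=> x; rewrite !fmap_id.
- by move=> x y z g f; rewrite !fmap_comp.
Defined.

Record NatTrans (C D : Category) (F G : Functor C D) := {
  ntc :> forall x : C, chom (F x) (G x);
  ntnat : forall (x y : C) (f : chom x y),
      ccomp (ntc y) (fmap F f) = ccomp (fmap G f) (ntc x) }.

Definition NTid (C D : Category) (F : Functor C D) : NatTrans F F.
Proof.
refine {| ntc := fun x => cid (F x) |}.
by move=> x y f; rewrite (ccomp_id_l (cax D)) (ccomp_id_r (cax D)).
Defined.

Definition NTvcomp (C D : Category) (F G H : Functor C D)
  (b : NatTrans G H) (a : NatTrans F G) : NatTrans F H.
Proof.
refine {| ntc := fun x => ccomp (b x) (a x) |}.
move=> x y f.
by rewrite -(ccomp_assoc (cax D)) (ntnat a) (ccomp_assoc (cax D)) (ntnat b)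
           (ccomp_assoc (cax D)).
Defined.

Definition NThcomp (C D E : Category) (F F' : Functor C D) (H H' : Functor D E)
  (b : NatTrans H H') (a : NatTrans F F') : NatTrans (FComp H F) (FComp H' F').
Proof.
refine (@Build_NatTrans C E (FComp H F) (FComp H' F')
  (fun x => ccomp (b (F' x)) (fmap H (a x))) _).
move=> x y f /=.
rewrite -(ccomp_assoc (cax E)) -fmap_comp (ntnat a) fmap_comp.
rewrite (ccomp_assoc (cax E)) (ntnat b) -(ccomp_assoc (cax E)).
by [].
Defined.

Definition ntcast (C D : Category) (F F' G G' : Functor C D)
  (e1 : F = F') (e2 : G = G') (a : NatTrans F G) : NatTrans F' G' :=
  @cast2 (Functor C D) (@NatTrans C D) F F' G G' e1 e2 a.

Record TwoCatData := {
  tobj :> Type;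
  h1 : tobj -> tobj -> Type;
  h2 : forall A B, h1 A B -> h1 A B -> Type;
  id1 : forall A, h1 A A;
  comp1 : forall A B C, h1 B C -> h1 A B -> h1 A C;
  id2 : forall A B (f : h1 A B), h2 f f;
  vcomp : forall A B (f g h : h1 A B), h2 g h -> h2 f g -> h2 f h;
  hcomp : forall A B C (f f' : h1 A B) (g g' : h1 B C),
      h2 g g' -> h2 f f' -> h2 (comp1 g f) (comp1 g' f') }.
Arguments h1 {t} A B.
Arguments h2 {t A B} _ _.
Arguments id1 {t} A.
Arguments comp1 {t A B C} _ _.
Arguments id2 {t A B} _.
Arguments vcomp {t A B f g h} _ _.
Arguments hcomp {t A B C f f' g g'} _ _.

Record IsTwoCat (C : TwoCatData) : Prop := {
  comp1_id_l : forall (A B : C) (f : h1 A B), comp1 (id1 B) f = f;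
  comp1_id_r : forall (A B : C) (f : h1 A B), comp1 f (id1 A) = f;
  comp1_assoc : forall (A B C' D : C) (h : h1 C' D) (g : h1 B C') (f : h1 A B),
      comp1 h (comp1 g f) = comp1 (comp1 h g) f;
  vcomp_id_l : forall (A B : C) (f g : h1 A B) (a : h2 f g), vcomp (id2 g) a = a;
  vcomp_id_r : forall (A B : C) (f g : h1 A B) (a : h2 f g), vcomp a (id2 f) = a;
  vcomp_assoc : forall (A B : C) (f g h k : h1 A B)
      (c : h2 h k) (b : h2 g h) (a : h2 f g),
      vcomp c (vcomp b a) = vcomp (vcomp c b) a;
  hcomp_id2 : forall (A B C' : C) (f : h1 A B) (g : h1 B C'),
      hcomp (id2 g) (id2 f) = id2 (comp1 g f);
  interchange : forall (A B C' : C) (f f' f'' : h1 A B) (g g' g'' : h1 B C')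
      (b' : h2 g' g'') (b : h2 g g') (a' : h2 f' f'') (a : h2 f f'),
      hcomp (vcomp b' b) (vcomp a' a) = vcomp (hcomp b' a') (hcomp b a);
  hcomp_id_l : forall (A B : C) (f f' : h1 A B) (a : h2 f f'),
      @cast2 _ h2 _ _ _ _ (comp1_id_l f) (comp1_id_l f') (hcomp (id2 (id1 B)) a) = a;
  hcomp_id_r : forall (A B : C) (f f' : h1 A B) (a : h2 f f'),
      @cast2 _ h2 _ _ _ _ (comp1_id_r f) (comp1_id_r f') (hcomp a (id2 (id1 A))) = a;
  hcomp_assoc : forall (A B C' D : C) (f f' : h1 A B) (g g' : h1 B C') (h h' : h1 C' D)
      (c : h2 h h') (b : h2 g g') (a : h2 f f'),
      @cast2 _ h2 _ _ _ _ (comp1_assoc h g f) (comp1_assoc h' g' f')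
        (hcomp c (hcomp b a)) = hcomp (hcomp c b) a }.

Record TwoCat := { tcdata :> TwoCatData; tcax : IsTwoCat tcdata }.

Record TwoFunctorData (C : TwoCat) := {
  F0 :> C -> Category;
  F1 : forall A B : C, h1 A B -> Functor (F0 A) (F0 B);
  F2 : forall (A B : C) (f g : h1 A B), h2 f g -> NatTrans (F1 f) (F1 g) }.
Arguments F1 {C} _ {A B} _.
Arguments F2 {C} _ {A B f g} _.

Record IsTwoFunctor (C : TwoCat) (D : TwoFunctorData C) : Prop := {
  F1_id : forall A : C, F1 D (id1 A) = FId (D A);
  F1_comp : forall (A B C' : C) (f : h1 A B) (g : h1 B C'),
      F1 D (comp1 g f) = FComp (F1 D g) (F1 D f);
  F2_id : forall (A B : C) (f : h1 A B), F2 D (id2 f) = NTid (F1 D f);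
  F2_vcomp : forall (A B : C) (f g h : h1 A B) (b : h2 g h) (a : h2 f g),
      F2 D (vcomp b a) = NTvcomp (F2 D b) (F2 D a);
  F2_hcomp : forall (A B C' : C) (f f' : h1 A B) (g g' : h1 B C')
      (b : h2 g g') (a : h2 f f'),
      F2 D (hcomp b a)
      = ntcast (esym (F1_comp f g)) (esym (F1_comp f' g')) (NThcomp (F2 D b) (F2 D a)) }.

Record TwoFunctor (C : TwoCat) := { tfdata :> TwoFunctorData C; tfax : IsTwoFunctor tfdata }.

Local Open Scope ereal_scope.
Local Open Scope classical_set_scope.

Record lawvere_weight (R : realType) (C : TwoCat)
    (W : forall A B : C, h1 A B -> \bar R) : Prop := {
  lw_ge0 : forall (A B : C) (f : h1 A B), 0 <= W A B f;
  lw_id : forall A : C, W A A (id1 A) = 0;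
  lw_comp : forall (A B C' : C) (f : h1 A B) (g : h1 B C'),
      W A C' (comp1 g f) <= W B C' g + W A B f }.

(* X in Delta(A), Y in Delta(B), g : B -> A, h : A -> B.
   Delta(alpha)_X : Delta_{1_A}(X) -> Delta_{gh}(X) is transported along
   Delta_{1_A} = Id and Delta_{gh} = Delta_g Delta_h. *)
Definition interleaved (C : TwoCat) (D : TwoFunctor C) (A B : C)
    (X : D A) (Y : D B) (g : h1 B A) (h : h1 A B) : Prop :=
  exists (phi : chom X (F1 D g Y)) (psi : chom Y (F1 D h X))
         (al : h2 (id1 A) (comp1 g h)) (be : h2 (id1 B) (comp1 h g)),
    ccomp (fmap (F1 D g) psi) phi
      = @homcast (D A) _ X _ (F1 D g (F1 D h X))
          (f_equal (fun F : Functor (D A) (D A) => F X) (F1_id (tfax D) A))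
          (f_equal (fun F : Functor (D A) (D A) => F X) (F1_comp (tfax D) h g))
          (F2 D al X)
    /\
    ccomp (fmap (F1 D h) phi) psi
      = @homcast (D B) _ Y _ (F1 D h (F1 D g Y))
          (f_equal (fun F : Functor (D B) (D B) => F Y) (F1_id (tfax D) B))
          (f_equal (fun F : Functor (D B) (D B) => F Y) (F1_comp (tfax D) g h))
          (F2 D be Y).

Definition idist (R : realType) (C : TwoCat) (D : TwoFunctor C)
    (W : forall A B : C, h1 A B -> \bar R) (A B : C) (X : D A) (Y : D B) : \bar R :=
  ereal_inf [set r | exists (g : h1 B A) (h : h1 A B),
                       interleaved X Y g h /\ r = maxe (W B A g) (W A B h)].

(* Im(Delta) as the (disjoint) union of the object sets Delta(A)_0 *)
Definition ImDelta (C : TwoCat) (D : TwoFunctor C) : Type := {A : C & D A}.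

Definition dIm (R : realType) (C : TwoCat) (D : TwoFunctor C)
    (W : forall A B : C, h1 A B -> \bar R) (p q : ImDelta D) : \bar R :=
  idist W (projT2 p) (projT2 q).

Record ext_pseudometric (R : realType) (T : Type) (d : T -> T -> \bar R) : Prop := {
  epm_ge0 : forall x y, 0 <= d x y;
  epm_refl : forall x, d x x = 0;
  epm_sym : forall x y, d x y = d y x;
  epm_tri : forall x y z, d x z <= d x y + d y z }.
Arguments dIm {R C} D W p q.

(* Main.v *)
Set Warnings "-all".
Require Import Defs.
Set Warnings "-all".
From HB Require Import structures.
From mathcomp Require Import all_boot all_order all_algebra.
From mathcomp Require Import boolp classical_sets reals constructive_ereal ereal.
Set Implicit Arguments. Unset Strict Implicit. Unset Printing Implicit Defensive.

Definition idc (C : CatData) (x y : C) (e : x = y) : chom x y :=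
  homcast (Logic.eq_refl x) e (Defs.cid x).

Lemma idcE (C : CatData) (x y : C) (e e' : x = y) : idc e = idc e'.
Proof. by rewrite (Prop_irrelevance e e'). Qed.

Lemma idc_loop (C : CatData) (x : C) (e : x = x) : idc e = Defs.cid x.
Proof. by rewrite (Prop_irrelevance e (Logic.eq_refl x)). Qed.

Section CatLemmas.
Variable C : Category.

Lemma homcast_idc (x x' y y' : C) (e1 : x = x') (e2 : y = y') (u : chom x y) :
  homcast e1 e2 u = ccomp (idc e2) (ccomp u (idc (esym e1))).
Proof.
case: x' / e1; case: y' / e2 => /=.
by rewrite /idc /= (ccomp_id_l (cax C)) (ccomp_id_r (cax C)).
Qed.

Lemma idc_compA (x y z w : C) (e2 : y = z) (e1 : x = y) (f : chom w x) :
  ccomp (idc e2) (ccomp (idc e1) f) = ccomp (idc (etrans e1 e2)) f.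
Proof.
case: z / e2; case: y / e1 => /=.
by rewrite /idc /= (ccomp_id_l (cax C)).
Qed.

Lemma idc_comp (x y z : C) (e2 : y = z) (e1 : x = y) :
  ccomp (idc e2) (idc e1) = idc (etrans e1 e2).
Proof.
case: z / e2; case: y / e1 => /=.
by rewrite /idc /= (ccomp_id_l (cax C)).
Qed.

Lemma cid_l (x y : C) (f : chom x y) : ccomp (Defs.cid y) f = f.
Proof. exact: (ccomp_id_l (cax C)). Qed.
Lemma cid_r (x y : C) (f : chom x y) : ccomp f (Defs.cid x) = f.
Proof. exact: (ccomp_id_r (cax C)). Qed.
Lemma cassoc (x y z w : C) (h : chom z w) (g : chom y z) (f : chom x y) :
  ccomp (ccomp h g) f = ccomp h (ccomp g f).
Proof. by rewrite (ccomp_assoc (cax C)). Qed.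

Lemma idc_loop_l (x y : C) (e : y = y) (f : chom x y) : ccomp (idc e) f = f.
Proof. by rewrite idc_loop cid_l. Qed.

End CatLemmas.

Lemma fmap_idc (C D : Category) (F : Functor C D) (x y : C) (e : x = y) :
  Defs.fmap F (idc e) = idc (f_equal F e).
Proof. case: y / e; rewrite /idc /=; exact: Defs.fmap_id. Qed.

Lemma fmap_eqF (C D : Category) (F G : Functor C D) (e : F = G) (x y : C)
  (u : chom x y) :
  Defs.fmap F u = ccomp (idc (esym (f_equal (fun H : Functor C D => H y) e)))
               (ccomp (Defs.fmap G u) (idc (f_equal (fun H : Functor C D => H x) e))).
Proof. case: G / e; rewrite /idc /= cid_l cid_r //. Qed.

Lemma ntcast_at (C D : Category) (F F' G G' : Functor C D)
  (e1 : F = F') (e2 : G = G') (a : NatTrans F G) (x : C) :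
  ntcast e1 e2 a x = ccomp (idc (f_equal (fun H : Functor C D => H x) e2))
     (ccomp (a x) (idc (esym (f_equal (fun H : Functor C D => H x) e1)))).
Proof. case: F' / e1; case: G' / e2; rewrite /idc /= cid_l cid_r //. Qed.

Lemma fmap_FComp (C D E : Category) (G : Functor D E) (F : Functor C D) (x y : C) (u : chom x y) :
  Defs.fmap (FComp G F) u = Defs.fmap G (Defs.fmap F u).
Proof. by []. Qed.

Ltac norm := repeat (rewrite ?Defs.fmap_id ?cid_l ?cid_r ?cassoc ?idc_compA ?idc_comp ?Defs.fmap_comp ?fmap_idc ?idc_loop_l ?idc_loop).

Section TwoF.
Variables (TC : TwoCat) (D : TwoFunctor TC).

Lemma F2_cast2 (A B : TC) (f f' g g' : h1 A B) (e1 : f = f') (e2 : g = g')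
  (a : h2 f g) (x : D A) :
  F2 D (@cast2 _ h2 f f' g g' e1 e2 a) x =
  ccomp (idc (f_equal (fun k => F1 D k x) e2))
    (ccomp (F2 D a x) (idc (esym (f_equal (fun k => F1 D k x) e1)))).
Proof. case: f' / e1; case: g' / e2; rewrite /idc /= cid_l cid_r //. Qed.

Lemma F1comp_fmap (A B E : TC) (f : h1 A B) (g : h1 B E) (x y : D A) (u : chom x y) :
  Defs.fmap (F1 D g) (Defs.fmap (F1 D f) u) =
  ccomp (idc (esym (f_equal (fun H : Functor (D A) (D E) => H y) (esym (F1_comp (tfax D) f g)))))
    (ccomp (Defs.fmap (F1 D (comp1 g f)) u)
       (idc (f_equal (fun H : Functor (D A) (D E) => H x) (esym (F1_comp (tfax D) f g))))).
Proof. exact: (fmap_eqF (esym (F1_comp (tfax D) f g))). Qed.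

Lemma F1id_fmap (A : TC) (x y : D A) (u : chom x y) :
  Defs.fmap (F1 D (id1 A)) u =
  ccomp (idc (esym (f_equal (fun H : Functor (D A) (D A) => H y) (F1_id (tfax D) A))))
    (ccomp u (idc (f_equal (fun H : Functor (D A) (D A) => H x) (F1_id (tfax D) A)))).
Proof. exact: (fmap_eqF (F1_id (tfax D) A)). Qed.

Lemma F2_hcomp_at (A B E : TC) (f f' : h1 A B) (g g' : h1 B E)
  (b : h2 g g') (a : h2 f f') (x : D A) :
  F2 D (hcomp b a) x =
  ccomp (idc (f_equal (fun H : Functor (D A) (D E) => H x) (esym (F1_comp (tfax D) f' g'))))
   (ccomp (ccomp (F2 D b (F1 D f' x)) (Defs.fmap (F1 D g) (F2 D a x)))
     (idc (esym (f_equal (fun H : Functor (D A) (D E) => H x) (esym (F1_comp (tfax D) f g)))))).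
Proof. by rewrite (F2_hcomp (tfax D)) ntcast_at. Qed.

Lemma F2_vcomp_at (A B : TC) (f g h : h1 A B) (b : h2 g h) (a : h2 f g) (x : D A) :
  F2 D (vcomp b a) x = ccomp (F2 D b x) (F2 D a x).
Proof. by rewrite (F2_vcomp (tfax D)). Qed.

Lemma F2_id_at (A B : TC) (f : h1 A B) (x : D A) :
  F2 D (id2 f) x = Defs.cid (F1 D f x).
Proof. by rewrite (F2_id (tfax D)). Qed.

Lemma natA (A B : TC) (f g : h1 A B) (a : h2 f g) (x y : D A) (u : chom x y)
  (w : D B) (k : chom w (F1 D f x)) :
  ccomp (Defs.fmap (F1 D g) u) (ccomp (F2 D a x) k) =
  ccomp (F2 D a y) (ccomp (Defs.fmap (F1 D f) u) k).
Proof. by rewrite !(ccomp_assoc (cax _)) (ntnat (F2 D a)). Qed.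

Lemma natAF (A B A' : Category) (H : Functor B A') (F G : Functor A B) (a : NatTrans F G)
  (x y : A) (u : chom x y) (w : A') (k : chom w (H (F x))) :
  ccomp (Defs.fmap H (Defs.fmap G u)) (ccomp (Defs.fmap H (a x)) k) =
  ccomp (Defs.fmap H (a y)) (ccomp (Defs.fmap H (Defs.fmap F u)) k).
Proof. by rewrite !(ccomp_assoc (cax _)) -!Defs.fmap_comp (ntnat a). Qed.

Definition halfE (A B : TC) (X : D A) (Y : D B) (g : h1 B A) (h : h1 A B)
  (phi : chom X (F1 D g Y)) (psi : chom Y (F1 D h X)) (al : h2 (id1 A) (comp1 g h)) :=
  ccomp (Defs.fmap (F1 D g) psi) phi
      = @homcast (D A) _ X _ (F1 D g (F1 D h X))
          (f_equal (fun F : Functor (D A) (D A) => F X) (F1_id (tfax D) A))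
          (f_equal (fun F : Functor (D A) (D A) => F X) (F1_comp (tfax D) h g))
          (F2 D al X).

Arguments halfE {A B} X Y g h phi psi al.

Definition compc (A B E : TC) (X : D A) (Y : D B) (Z : D E) (g : h1 B A) (g' : h1 E B)
  (phi : chom X (F1 D g Y)) (phi' : chom Y (F1 D g' Z)) : chom X (F1 D (comp1 g g') Z) :=
  ccomp (idc (esym (f_equal (fun F : Functor (D E) (D A) => F Z) (F1_comp (tfax D) g' g))))
    (ccomp (Defs.fmap (F1 D g) phi') phi).

Arguments compc {A B E X Y Z g g'} phi phi'.

Lemma half_comp (A B E : TC) (X : D A) (Y : D B) (Z : D E)
  (g : h1 B A) (h : h1 A B) (g' : h1 E B) (h' : h1 B E)
  phi psi al phi' psi' al' :
  halfE X Y g h phi psi al -> halfE Y Z g' h' phi' psi' al' ->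
  exists Al, halfE X Z (comp1 g g') (comp1 h' h) (compc phi phi') (compc psi' psi) Al.
Proof.
move=> E1 E2.
have e1 : comp1 (comp1 g (id1 B)) h = comp1 g h by rewrite (comp1_id_r (tcax TC)).
have e2 : comp1 (comp1 g (comp1 g' h')) h = comp1 (comp1 g g') (comp1 h' h).
  by rewrite !(comp1_assoc (tcax TC)).
exists (vcomp (@cast2 _ h2 _ _ _ _ e1 e2 (hcomp (hcomp (id2 g) al') (id2 h))) al).
rewrite /halfE /compc.
rewrite homcast_idc F2_vcomp_at F2_cast2 !F2_hcomp_at !F2_id_at.
rewrite !(fmap_eqF (F1_comp (tfax D) g' g)) !fmap_FComp.
norm.
have E2' : forall (W : D A) (k : chom W (F1 D g Y)),
  ccomp (Defs.fmap (F1 D g) (Defs.fmap (F1 D g') psi')) (ccomp (Defs.fmap (F1 D g) phi') k)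
  = ccomp (Defs.fmap (F1 D g) (ccomp (Defs.fmap (F1 D g') psi') phi')) k.
  by move=> W k; rewrite Defs.fmap_comp cassoc.
rewrite E2' E2 homcast_idc.
norm.
rewrite (F1comp_fmap h' g' psi).
norm.
rewrite natAF F1id_fmap.
norm.
rewrite E1 homcast_idc.
norm.
f_equal; [exact: idcE | f_equal; f_equal; exact: idcE].
Qed.

Lemma half_refl (A : TC) (X : D A) :
  exists al, halfE X X (id1 A) (id1 A)
    (idc (esym (f_equal (fun F : Functor (D A) (D A) => F X) (F1_id (tfax D) A))))
    (idc (esym (f_equal (fun F : Functor (D A) (D A) => F X) (F1_id (tfax D) A)))) al.
Proof.
exists (@cast2 _ h2 _ _ _ _ (Logic.eq_refl (id1 A)) (esym (comp1_id_l (tcax TC) (id1 A))) (id2 (id1 A))).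
rewrite /halfE F1id_fmap homcast_idc F2_cast2 F2_id_at.
norm. exact: idcE.
Qed.

Lemma interleaved_sym (A B : TC) (X : D A) (Y : D B) g h :
  interleaved X Y g h -> interleaved Y X h g.
Proof. by case=> phi [psi [al [be [H1 H2]]]]; exists psi, phi, be, al. Qed.

Lemma interleaved_refl (A : TC) (X : D A) : interleaved X X (id1 A) (id1 A).
Proof.
have [al H] := half_refl X.
by exists (idc (esym (f_equal (fun F : Functor (D A) (D A) => F X) (F1_id (tfax D) A)))),
  (idc (esym (f_equal (fun F : Functor (D A) (D A) => F X) (F1_id (tfax D) A)))), al, al.
Qed.

Lemma interleaved_comp (A B E : TC) (X : D A) (Y : D B) (Z : D E)
  (g : h1 B A) (h : h1 A B) (g' : h1 E B) (h' : h1 B E) :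
  interleaved X Y g h -> interleaved Y Z g' h' ->
  interleaved X Z (comp1 g g') (comp1 h' h).
Proof.
case=> phi [psi [al [be [H1 H2]]]]; case=> phi' [psi' [al' [be' [H1' H2']]]].
have [Al HA] := half_comp H1 H1'.
have [Be HB] := half_comp H2' H2.
by exists (compc phi phi'), (compc psi' psi), Al, Be.
Qed.
End TwoF.

Import Order.TTheory.
Local Open Scope ereal_scope.
Local Open Scope classical_set_scope.

Lemma addinf_le (R : realType) (c : \bar R) (S : set \bar R) (x : \bar R) :
  0 <= c -> 0 <= ereal_inf S -> (forall b, S b -> x <= c + b) -> x <= c + ereal_inf S.
Proof.
case: c => [r| |] //= c0 i0 H.
- rewrite -leeBlDl //; apply/ereal_infP => b Sb; rewrite leeBlDl //; exact: H.
- have ni : ereal_inf S != -oo.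
    by case: (ereal_inf S) i0.
  by rewrite addye ?leey.
Qed.

Theorem theorem3p16 (R : realType) (C : TwoCat) (D : TwoFunctor C)
    (W : forall A B : C, h1 A B -> \bar R) :
  lawvere_weight W -> ext_pseudometric (dIm D W).
Proof.
move=> LW.
have ge0 : forall (A B : C) (X : D A) (Y : D B), 0 <= idist W X Y.
  move=> A B X Y; apply/ereal_infP => r [g [h [_ ->]]].
  by rewrite le_max (lw_ge0 LW).
have sub : forall (A B : C) (X : D A) (Y : D B), idist W X Y <= idist W Y X.
  move=> A B X Y; apply: ereal_inf_le_tmp => r [g [h [I ->]]].
  by exists h, g; split; [exact: interleaved_sym | rewrite maxC].
split.
- by case=> A X [B Y]; exact: ge0.
- case=> A X; apply/le_anti; rewrite ge0 andbT /dIm /=.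
  apply: ge_ereal_inf; exists 0 => //; exists (id1 A), (id1 A); split.
    exact: interleaved_refl.
  by rewrite (lw_id LW) maxxx.
- by case=> A X [B Y]; apply/le_anti; rewrite !sub.
- case=> A X [B Y] [E Z]; rewrite /dIm /=.
  apply: addinf_le; [exact: ge0 | exact: ge0 |].
  move=> b [g' [h' [I' ->]]]; rewrite addeC.
  apply: addinf_le; [by rewrite le_max (lw_ge0 LW) | exact: ge0 |].
  move=> a [g [h [I ->]]].
  apply: ge_ereal_inf; exists (maxe (W _ _ (comp1 g g')) (W _ _ (comp1 h' h))).
    by exists (comp1 g g'), (comp1 h' h); split; [exact: (interleaved_comp I I') | by []].
  rewrite ge_max; apply/andP; split.
    apply: le_trans (lw_comp LW _ _) _; rewrite addeC.
    by apply: leeD; rewrite le_max lexx ?orbT.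
  apply: le_trans (lw_comp LW _ _) _.
  by apply: leeD; rewrite le_max lexx ?orbT.
Qed.
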